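(* Assume the setting and hypotheses (A1)–(A4) of the context, with $\gamma,\lambda>0$, $\beta\in(0,1)$, $c_1\in(0,1/2)$, and let $\{z^k=(u^k,v^k,C^k)\}$ be generated by the inexact block coordinate descent scheme described in the context. Then there exists a constant $w_1>0$ such that for all $k$, $$E_\lambda(z^k)-E_\lambda(z^{k+1})\ge w_1\|z^{k+1}-z^k\|^2.$$
   Context: Let $n\ge1$, $\hat X\in\mathbb{R}^{n\times n}$ an observed transport plan (nonnegative, with row sums $\mu$ and column sums $\nu$, $\mu,\nu$ probability vectors), $\psi:\mathbb{R}\to(-\infty,+\infty]$ convex with $\psi(Z):=\sum_{i,j}\psi(Z_{ij})$ for matrices, $(u\oplus v)_{ij}:=u_i+v_j$, $E(u,v,C):=\psi\big((u\oplus v-C)/\gamma\big)-\big\langle(u\oplus v-C)/\gamma,\hat X\big\rangle$ and $E_\lambda(u,v,C):=E(u,v,C)+\lambda(R_1(u)+R_2(v)+R_3(C))$. Hypotheses: (A1) $\psi$ is of Legendre type and $C^2$ on $\operatorname{int}(\operatorname{dom}\psi)$; (A2) for every generated iterate, $\hat X_{ij}$ and $(u^k_i+v^k_j-C^k_{ij})/\gamma$ lie in $\operatorname{int}(\operatorname{dom}\psi)$ for all $i,j$; (A3) $R_1,R_2:\mathbb{R}^n\to\mathbb{R}$, $R_3:\mathbb{R}^{n\times n}\to\mathbb{R}$ are continuously differentiable and strongly convex with moduli $\sigma_1,\sigma_2,\sigma_3>0$; (A4) $\mathcal{C}\subseteq\mathbb{R}^{n\times n}$ is nonempty, closed, convex,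 with Euclidean projection $P_{\mathcal{C}}$. The scheme, from $z^0\in\mathbb{R}^n\times\mathbb{R}^n\times\mathcal{C}$: at iteration $k$, (u-block) with $g_u=\nabla_uE_\lambda(u^k,v^k,C^k)$, $H_u=\nabla^2_{uu}E_\lambda(u^k,v^k,C^k)$, $d_u=-H_u^{-1}g_u$, let $\alpha^u_k$ be the first $\alpha\in\{1,\beta,\beta^2,\dots\}$ with $E_\lambda(u^k+\alpha d_u,v^k,C^k)\le E_\lambda(u^k,v^k,C^k)+c_1\alpha g_u^\top d_u$, and set $u^{k+1}=u^k+\alpha_k^ud_u$; (v-block) the same with $v$ in place of $u$ at the point $(u^{k+1},v^k,C^k)$, giving $v^{k+1}=v^k+\alpha_k^vd_v$; (C-block) with $g_C=\nabla_CE_\lambda(u^{k+1},v^{k+1},C^k)$ and $C(\alpha):=P_{\mathcal{C}}(C^k-\alpha g_C)$, let $\alpha^C_k$ be the first $\alpha\in\{1,\beta,\beta^2,\dots\}$ with $E_\lambda(u^{k+1},v^{k+1},C(\alpha))\le E_\lambda(u^{k+1},v^{k+1},C^k)+c_1\langle g_C,C(\alpha)-C^k\rangle$, and set $C^{k+1}=C(\alpha^C_k)$. *)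

(* Defs.v *)
From HB Require Import structures.
From mathcomp Require Import all_boot all_order all_algebra.
From mathcomp Require Import reals constructive_ereal.
Set Implicit Arguments.
Unset Strict Implicit.
Unset Printing Implicit Defensive.
Import Order.TTheory GRing.Theory Num.Theory.
Local Open Scope ring_scope.

Section Defs.
Variable R : realType.

Definition frob {p q : nat} (A B : 'M[R]_(p, q)) : R :=
  \sum_(i < p) \sum_(j < q) A i j * B i j.
Definition sqnorm {p q : nat} (A : 'M[R]_(p, q)) : R := frob A A.
Definition fnorm {p q : nat} (A : 'M[R]_(p, q)) : R := Num.sqrt (sqnorm A).

Definition oplus {n : nat} (u v : 'cV[R]_n) : 'M[R]_n :=
  \matrix_(i, j) (u i 0 + v j 0).

Definition never_minfty (f : R -> \bar R) := forall x, f x != -oo%E.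
Definition in_dom (f : R -> \bar R) (x : R) := (f x < +oo)%E.
Definition in_int_dom (f : R -> \bar R) (x : R) :=
  exists2 r : R, 0 < r & forall y, `|y - x| < r -> in_dom f y.
Definition proper_fun (f : R -> \bar R) := never_minfty f /\ exists x, in_dom f x.
(* closed = lower semicontinuous *)
Definition lsc (f : R -> \bar R) :=
  forall x (a : R), (a%:E < f x)%E ->
    exists2 d : R, 0 < d & forall y, `|y - x| < d -> (a%:E < f y)%E.
Definition convex_fun (f : R -> \bar R) :=
  forall x y t : R, 0 < t < 1 ->
    (f (t * x + (1 - t) * y)%R <= t%:E * f x + (1 - t)%R%:E * f y)%E.
Definition deriv_atE (f : R -> \bar R) (x d : R) :=
  forall eps : R, 0 < eps -> exists2 delta : R, 0 < delta &
    forall y, `|y - x| < delta ->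
      f y \is a fin_num /\
      `|fine (f y) - fine (f x) - d * (y - x)| <= eps * `|y - x|.
Definition deriv_at (f : R -> R) (x d : R) :=
  forall eps : R, 0 < eps -> exists2 delta : R, 0 < delta &
    forall y, `|y - x| < delta -> `|f y - f x - d * (y - x)| <= eps * `|y - x|.
Definition cont_at (f : R -> R) (x : R) :=
  forall eps : R, 0 < eps -> exists2 delta : R, 0 < delta &
    forall y, `|y - x| < delta -> `|f y - f x| < eps.
Definition ess_smooth (f : R -> \bar R) :=
  (exists x, in_int_dom f x) /\
  (forall x, in_int_dom f x -> exists d, deriv_atE f x d) /\
  (forall (s ds : nat -> R) (b : R),
     (forall k, in_int_dom f (s k)) -> (forall k, deriv_atE f (s k) (ds k)) ->
     (forall e : R, 0 < e -> exists N, forall k, (N <= k)%N -> `|s k - b| < e) ->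
     ~ in_int_dom f b ->
     forall M : R, exists N, forall k, (N <= k)%N -> M <= `|ds k|).
Definition subgrad (f : R -> \bar R) (x s : R) :=
  f x \is a fin_num /\ forall y, (f x + (s * (y - x))%:E <= f y)%E.
Definition dom_subdiff (f : R -> \bar R) (x : R) := exists s, subgrad f x s.
Definition convex_set1 (S : R -> Prop) :=
  forall x y t : R, S x -> S y -> 0 <= t <= 1 -> S (t * x + (1 - t) * y).
Definition ess_strictly_convex (f : R -> \bar R) :=
  forall S : R -> Prop, (forall x, S x -> dom_subdiff f x) -> convex_set1 S ->
    forall x y t : R, S x -> S y -> x != y -> 0 < t < 1 ->
      (f (t * x + (1 - t) * y)%R < t%:E * f x + (1 - t)%R%:E * f y)%E.
Definition legendre (f : R -> \bar R) :=
  [/\ proper_fun f, lsc f, convex_fun f, ess_smooth f & ess_strictly_convex f].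
Definition C2_on_int_dom (f : R -> \bar R) :=
  exists df d2f : R -> R, forall x, in_int_dom f x ->
    [/\ deriv_atE f x (df x), deriv_at df x (d2f x) & cont_at d2f x].

Definition grad_at {p q : nat} (f : 'M[R]_(p, q) -> R) (x g : 'M[R]_(p, q)) :=
  forall eps : R, 0 < eps -> exists2 delta : R, 0 < delta &
    forall h, fnorm h < delta -> `|f (x + h) - f x - frob g h| <= eps * fnorm h.
Definition grad_atE {p q : nat} (f : 'M[R]_(p, q) -> \bar R) (x g : 'M[R]_(p, q)) :=
  f x \is a fin_num /\
  forall eps : R, 0 < eps -> exists2 delta : R, 0 < delta &
    forall h, fnorm h < delta ->
      f (x + h) \is a fin_num /\
      `|fine (f (x + h)) - fine (f x) - frob g h| <= eps * fnorm h.
Definition hess_atE {n : nat} (f : 'cV[R]_n -> \bar R) (x : 'cV[R]_n) (H : 'M[R]_n) :=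
  exists G : 'cV[R]_n -> 'cV[R]_n, exists2 r : R, 0 < r &
    (forall y, fnorm (y - x) < r -> grad_atE f y (G y)) /\
    (forall eps : R, 0 < eps -> exists2 delta : R, 0 < delta &
       forall h, fnorm h < delta ->
         fnorm (G (x + h) - G x - H *m h) <= eps * fnorm h).
Definition continuously_differentiable {p q : nat} (f : 'M[R]_(p, q) -> R) :=
  exists G : 'M[R]_(p, q) -> 'M[R]_(p, q),
    (forall x, grad_at f x (G x)) /\
    (forall x (eps : R), 0 < eps -> exists2 delta : R, 0 < delta &
       forall y, fnorm (y - x) < delta -> fnorm (G y - G x) < eps).
Definition strongly_convex {p q : nat} (f : 'M[R]_(p, q) -> R) (sigma : R) :=
  forall x y (t : R), 0 <= t <= 1 ->
    f (t *: x + (1 - t) *: y) <=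
      t * f x + (1 - t) * f y - sigma / 2 * t * (1 - t) * sqnorm (x - y).

Definition closed_mset {n : nat} (S : 'M[R]_n -> Prop) :=
  forall X, (forall e : R, 0 < e -> exists2 Y, S Y & fnorm (X - Y) < e) -> S X.
Definition convex_mset {n : nat} (S : 'M[R]_n -> Prop) :=
  forall X Y (t : R), S X -> S Y -> 0 <= t <= 1 -> S (t *: X + (1 - t) *: Y).
Definition is_proj {n : nat} (S : 'M[R]_n -> Prop) (P : 'M[R]_n -> 'M[R]_n) :=
  forall X, S (P X) /\ forall Y, S Y -> fnorm (X - P X) <= fnorm (X - Y).

Definition Psi {n : nat} (psi : R -> \bar R) (Z : 'M[R]_n) : \bar R :=
  (\sum_(i < n) \sum_(j < n) psi (Z i j))%E.
Definition Eobj {n : nat} (psi : R -> \bar R) (gamma : R) (Xhat : 'M[R]_n)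
  (u v : 'cV[R]_n) (C : 'M[R]_n) : \bar R :=
  let Z := gamma^-1 *: (oplus u v - C) in
  (Psi psi Z - (frob Z Xhat)%:E)%E.
Definition Elam {n : nat} (psi : R -> \bar R) (gamma lambda : R) (Xhat : 'M[R]_n)
  (R1 R2 : 'cV[R]_n -> R) (R3 : 'M[R]_n -> R)
  (u v : 'cV[R]_n) (C : 'M[R]_n) : \bar R :=
  (Eobj psi gamma Xhat u v C + (lambda * (R1 u + R2 v + R3 C))%:E)%E.

Definition first_pow (P : R -> Prop) (beta : R) (m : nat) :=
  P (beta ^+ m) /\ forall m', (m' < m)%N -> ~ P (beta ^+ m').

End Defs.

(* Main.v *)
Require Import Defs.
From HB Require Import structures.
From mathcomp Require Import all_boot all_order all_algebra.
From mathcomp Require Import reals constructive_ereal.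
From mathcomp Require Import ring lra.
Import Order.TTheory GRing.Theory Num.Theory.
Local Open Scope ring_scope.

Section H.
Variable R : realType.

Lemma frobDZl p q (a : R) (A B X : 'M[R]_(p,q)) :
  frob (a *: A + B) X = a * frob A X + frob B X.
Proof.
rewrite /frob mulr_sumr -big_split /=; apply: eq_bigr => i _.
rewrite mulr_sumr -big_split /=; apply: eq_bigr => j _.
by rewrite !mxE; ring.
Qed.

Lemma frobZr p q (a : R) (X A : 'M[R]_(p,q)) :
  frob X (a *: A) = a * frob X A.
Proof.
rewrite /frob mulr_sumr; apply: eq_bigr => i _.
rewrite mulr_sumr; apply: eq_bigr => j _.
by rewrite !mxE; ring.
Qed.

Lemma frobZl p q (a : R) (A X : 'M[R]_(p,q)) :
  frob (a *: A) X = a * frob A X.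
Proof.
rewrite /frob mulr_sumr; apply: eq_bigr => i _.
rewrite mulr_sumr; apply: eq_bigr => j _.
by rewrite !mxE; ring.
Qed.

Lemma sqnorm_ge0 p q (A : 'M[R]_(p,q)) : 0 <= sqnorm A.
Proof.
rewrite /sqnorm /frob; apply: sumr_ge0 => i _; apply: sumr_ge0 => j _.
exact: sqr_ge0.
Qed.

Lemma sqnormZ p q (a : R) (A : 'M[R]_(p,q)) : sqnorm (a *: A) = a ^+ 2 * sqnorm A.
Proof.
rewrite /sqnorm frobZr.
have -> : frob (a *: A) A = a * frob A A.
  rewrite /frob mulr_sumr; apply: eq_bigr => i _.
  rewrite mulr_sumr; apply: eq_bigr => j _.
  by rewrite !mxE; ring.
by ring.
Qed.

Lemma fnormZ p q (a : R) (A : 'M[R]_(p,q)) : 0 <= a -> fnorm (a *: A) = a * fnorm A.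
Proof.
move=> a0; rewrite /fnorm sqnormZ sqrtrM ?sqr_ge0 // sqrtr_sqr ger0_norm //.
Qed.

Lemma fnorm_ge0 p q (A : 'M[R]_(p,q)) : 0 <= fnorm A.
Proof. exact: sqrtr_ge0. Qed.

Local Open Scope ereal_scope.

Lemma esum_conv (I : Type) (s : seq I) (t : R) (a b c : I -> \bar R) :
  (0 < t < 1)%R -> (forall i, a i != -oo) -> (forall i, b i != -oo) ->
  (forall i, c i <= t%:E * a i + (1 - t)%:E * b i) ->
  [/\ \sum_(i <- s) a i != -oo, \sum_(i <- s) b i != -oo &
   \sum_(i <- s) c i <= t%:E * \sum_(i <- s) a i + (1 - t)%:E * \sum_(i <- s) b i].
Proof.
move=> t01 an bn cle; elim: s => [|x s [IHa IHb IHc]].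
  by rewrite !big_nil !mule0 adde0.
have defn (y z : \bar R) : y != -oo -> z != -oo -> y +? z.
  by case: y => [y||] //; case: z.
have addn (y z : \bar R) : y != -oo -> z != -oo -> y + z != -oo.
  by case: y => [y||] //; case: z.
rewrite !big_cons; split; [exact: addn|exact: addn|].
rewrite muleDr ?defn // muleDr ?defn //.
rewrite addeACA; apply: leeD => //.
Qed.

Local Close Scope ereal_scope.

Lemma small_t (A B e d : R) : 0 <= A -> 0 <= B -> 0 < e -> 0 < d ->
  exists t, [/\ 0 < t, t < 1, t * A <= e & t * B < d].
Proof.
move=> A0 B0 e0 d0.
set a := e / (A + 1); set b := d / (B + 1).
have a0 : 0 < a by rewrite divr_gt0 // ltr_wpDl.
have b0 : 0 < b by rewrite divr_gt0 // ltr_wpDl.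
have aA : a * (A + 1) = e by rewrite /a mulfVK // gt_eqF // ltr_wpDl.
have bB : b * (B + 1) = d by rewrite /b mulfVK // gt_eqF // ltr_wpDl.
exists (Num.min (1/2) (Num.min a b)).
set t := Num.min _ _.
have t0 : 0 < t by rewrite !lt_min a0 b0 /=; lra.
have t1 : t <= 1/2 by rewrite ge_min lexx.
have ta : t <= a by rewrite ge_min; apply/orP; right; rewrite ge_min lexx.
have tb : t <= b by rewrite ge_min; apply/orP; right; rewrite ge_min lexx orbT.
split => //; first lra; nra.
Qed.

Definition sconv {p q : nat} (f : 'M[R]_(p,q) -> \bar R) (m : R) :=
  forall x y t, 0 < t < 1 -> f x \is a fin_num -> f y \is a fin_num ->
   f (t *: x + (1 - t) *: y) \is a fin_num /\
   fine (f (t *: x + (1 - t) *: y)) <=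
     t * fine (f x) + (1 - t) * fine (f y) - m / 2 * t * (1 - t) * sqnorm (x - y).

Lemma core p q (f : 'M[R]_(p,q) -> \bar R) m x y g :
  0 <= m -> sconv f m -> grad_atE f x g -> f y \is a fin_num ->
  frob g (y - x) + m / 2 * sqnorm (y - x) <= fine (f y) - fine (f x).
Proof.
move=> m0 sc [fx gr] fy; apply/ler_addgt0Pr => e e0.
set D := y - x; set L := fnorm D; set N := sqnorm D; set s := frob g D.
have L0 : 0 <= L by exact: fnorm_ge0.
have N0 : 0 <= N by exact: sqnorm_ge0.
set eps := e / 2 / (L + 1).
have eps0 : 0 < eps by rewrite /eps !divr_gt0 // ltr_wpDl.
have epsL : eps * (L + 1) = e / 2 by rewrite /eps mulfVK // gt_eqF // ltr_wpDl.
have [delta d0 Hd] := gr eps eps0.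
have [t [t0 t1 tA tB]] := @small_t (m * N) L e delta (mulr_ge0 m0 N0) L0 e0 d0.
have hn : fnorm (t *: D) = t * L by rewrite fnormZ // ltW.
have fnD : fnorm (t *: D) < delta by rewrite hn.
have [fz Hz] := Hd _ fnD.
have ez : x + t *: D = t *: y + (1 - t) *: x.
  by apply/matrixP => i j; rewrite !mxE; ring.
have t01 : 0 < t < 1 by rewrite t0 t1.
have [_ Hc] := sc y x t t01 fy fx.
rewrite -ez -/D -/N in Hc.
rewrite frobZr -/s hn in Hz.
move: Hz; set Fz := fine (f (x + t *: D)); set Fx := fine (f x); set Fy := fine (f y) => Hz.
have Hz' : t * s <= Fz - Fx + eps * (t * L).
  by move: Hz; rewrite ler_norml => /andP [h1 h2]; lra.
have eL : eps * L <= e / 2 by lra.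
have h1 : eps * (t * L) <= t * (e / 2).
  by rewrite mulrCA; apply: ler_wpM2l => //; exact: ltW.
have h2 : t * (t * (m * N)) <= t * e by apply: ler_wpM2l => //; exact: ltW.
rewrite -(ler_pM2l t0).
have -> : t * (s + m / 2 * N) = t * s + m / 2 * t * N by ring.
have -> : t * (Fy - Fx + e) = t * Fy - t * Fx + t * e by ring.
have : m / 2 * t * (1 - t) * N = m / 2 * t * N - (t * (t * (m * N))) / 2 by ring.
move: Hc; rewrite -/Fz -/Fx -/Fy => Hc. lra.
Qed.

Lemma sconv_dec {p q : nat} (f P : 'M[R]_(p,q) -> \bar R) (r : 'M[R]_(p,q) -> R) m :
  (forall x, P x != -oo%E) ->
  (forall x y t, (0 < t < 1)%R -> (P (t *: x + (1 - t) *: y)%R <= t%:E * P x + (1 - t)%R%:E * P y)%E) ->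
  (forall x y t, (0 < t < 1)%R -> (r (t *: x + (1 - t) *: y) <=
       t * r x + (1 - t) * r y - m / 2 * t * (1 - t) * sqnorm (x - y))%R) ->
  (forall x, f x = (P x + (r x)%:E)%E) -> sconv f m.
Proof.
move=> Pn Pc rc fD x y t t01; rewrite !fD.
case Px: (P x) => [a||]; last by have := Pn x; rewrite Px.
  2: by [].
case Py: (P y) => [b||]; last by have := Pn y; rewrite Py.
  2: by [].
move=> _ _.
have := Pc x y t t01; rewrite Px Py -!EFinM -EFinD.
case Pz: (P _) => [c||] //; last by have := Pn (t *: x + (1 - t) *: y); rewrite Pz.
rewrite lee_fin => hc; split => //=.
have := rc x y t t01; lra.
Qed.

Lemma esum_nn (I : Type) (s : seq I) (a : I -> \bar R) :
  (forall i, a i != -oo%E) -> (\sum_(i <- s) a i != -oo)%E.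
Proof.
move=> an; elim: s => [|x s IH]; rewrite ?big_nil ?big_cons //.
by move: (an x) IH; case: (a x) => [y||] //; case: (\sum_(i <- s) a i).
Qed.

Lemma Psi_nn n (psi : R -> \bar R) (Z : 'M[R]_n) :
  never_minfty psi -> Psi psi Z != -oo%E.
Proof.
move=> pn; apply: esum_nn => i; apply: esum_nn => j; exact: pn.
Qed.

Lemma Psi_conv n (psi : R -> \bar R) (Z1 Z2 : 'M[R]_n) t :
  convex_fun psi -> never_minfty psi -> (0 < t < 1)%R ->
  (Psi psi (t *: Z1 + (1 - t) *: Z2)%R <= t%:E * Psi psi Z1 + (1 - t)%R%:E * Psi psi Z2)%E.
Proof.
move=> pc pn t01; rewrite /Psi.
have an : forall i : 'I_n, (\sum_(j < n) psi (Z1 i j) != -oo)%E.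
  by move=> i; apply: esum_nn.
have bn : forall i : 'I_n, (\sum_(j < n) psi (Z2 i j) != -oo)%E.
  by move=> i; apply: esum_nn.
have cle : forall i : 'I_n, (\sum_(j < n) psi ((t *: Z1 + (1 - t) *: Z2)%R i j) <=
   t%:E * \sum_(j < n) psi (Z1 i j) + (1 - t)%R%:E * \sum_(j < n) psi (Z2 i j))%E.
  move=> i.
  have cl : forall j : 'I_n, (psi ((t *: Z1 + (1 - t) *: Z2)%R i j) <=
     t%:E * psi (Z1 i j) + (1 - t)%R%:E * psi (Z2 i j))%E.
    by move=> j; rewrite !mxE; apply: pc.
  by have [] := @esum_conv _ (index_enum 'I_n) t _ _ _ t01 (fun j => pn _) (fun j => pn _) cl.
by have [] := @esum_conv _ (index_enum 'I_n) t _ _ _ t01 an bn cle.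
Qed.

Lemma block_sconv n {p q : nat} (psi : R -> \bar R) (X : 'M[R]_n)
   (Z : 'M[R]_(p,q) -> 'M[R]_n) (K : 'M[R]_(p,q) -> R) (sig lam : R) :
  convex_fun psi -> never_minfty psi ->
  (forall x y t, Z (t *: x + (1 - t) *: y) = t *: Z x + (1 - t) *: Z y) ->
  (forall x y t, (0 <= t <= 1)%R -> (K (t *: x + (1 - t) *: y) <=
      t * K x + (1 - t) * K y - sig / 2 * t * (1 - t) * sqnorm (x - y))%R) ->
  (0 < lam)%R ->
  sconv (fun w => Psi psi (Z w) - (frob (Z w) X)%:E + (lam * K w)%R%:E)%E (lam * sig).
Proof.
move=> pc pn Za Kc l0.
apply: (@sconv_dec _ _ _ (fun w => Psi psi (Z w)) (fun w => - frob (Z w) X + lam * K w)%R).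
- by move=> x; apply: Psi_nn.
- by move=> x y t t01 /=; rewrite Za; apply: Psi_conv.
- move=> x y t t01 /=; rewrite Za frobDZl.
  rewrite frobZl.
  have t01' : (0 <= t <= 1)%R by case/andP: t01 => *; apply/andP; split; apply: ltW.
  have := Kc x y t t01'.
  set kk := K _; set N := sqnorm _ => h.
  have : (lam * kk <= lam * (t * K x + (1 - t) * K y - sig / 2 * t * (1 - t) * N))%R.
    by rewrite ler_pM2l.
  move=> h2; case/andP: t01 => ??.
  have -> : (lam * sig / 2 * t * (1 - t) * N = lam * (sig / 2 * t * (1 - t) * N))%R by ring.
  lra.
- by move=> x; rewrite EFinD EFinN addeA.
Qed.

Lemma dec_lemma {p q : nat} (f : 'M[R]_(p,q) -> \bar R) m c1 x y g :
  (0 <= m)%R -> (0 < c1 < 1/2)%R -> sconv f m -> grad_atE f x g -> f y \is a fin_num ->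
  (f y <= f x + (c1 * frob g (y - x))%:E)%E ->
  (c1 * m / 2 * sqnorm (y - x) <= fine (f x) - fine (f y))%R.
Proof.
move=> m0 c01 sc gr fy arm.
have := @core _ _ f m x y g m0 sc gr fy.
have fx := gr.1.
move: arm; rewrite -(fineK fx) -(fineK fy) -EFinD lee_fin /=.
set s := frob g _; set N := sqnorm _; set Fx := fine _; set Fy := fine _ => arm cr.
have N0 : (0 <= N)%R by exact: sqnorm_ge0.
case/andP: c01 => c0 c12.
have mN : (0 <= m / 2 * N)%R by apply: mulr_ge0 => //; apply: divr_ge0.
have s0 : (s <= 0)%R.
  have h : ((1 - c1) * s <= 0)%R by lra.
  rewrite leNgt; apply/negP => sp.
  have : (0 < (1 - c1) * s)%R by apply: mulr_gt0 => //; lra.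
  lra.
have cs : (c1 * s <= 0)%R by rewrite mulr_ge0_le0 // ltW.
have h : (m / 2 * N <= - s)%R by lra.
have : (c1 * (m / 2 * N) <= c1 * - s)%R by rewrite ler_pM2l.
have -> : (c1 * m / 2 * N = c1 * (m / 2 * N))%R by ring.
lra.
Qed.
End H.
Arguments sconv {R p q}.

Theorem lemma1 (R : realType) (n : nat)
  (Xhat : 'M[R]_n) (mu nu : 'cV[R]_n)
  (psi : R -> \bar R) (R1 R2 : 'cV[R]_n -> R) (R3 : 'M[R]_n -> R)
  (sigma1 sigma2 sigma3 : R)
  (Cset : 'M[R]_n -> Prop) (PC : 'M[R]_n -> 'M[R]_n)
  (gamma lambda beta c1 : R)
  (u v : nat -> 'cV[R]_n) (C : nat -> 'M[R]_n)
  (gu gv : nat -> 'cV[R]_n) (Hu Hv : nat -> 'M[R]_n) (gC : nat -> 'M[R]_n)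
  (mu_ mv mC : nat -> nat) :
  (0 < n)%N ->
  (* observed transport plan with marginals mu, nu (probability vectors) *)
  (forall i j, 0 <= Xhat i j) ->
  (forall i, mu i 0 = \sum_(j < n) Xhat i j) ->
  (forall j, nu j 0 = \sum_(i < n) Xhat i j) ->
  (forall i, 0 <= mu i 0) -> \sum_(i < n) mu i 0 = 1 ->
  (forall j, 0 <= nu j 0) -> \sum_(j < n) nu j 0 = 1 ->
  (* parameters *)
  0 < gamma -> 0 < lambda -> 0 < beta < 1 -> 0 < c1 < 1 / 2 ->
  (* (A1) *)
  legendre psi -> C2_on_int_dom psi ->
  (* (A3) *)
  continuously_differentiable R1 -> strongly_convex R1 sigma1 -> 0 < sigma1 ->
  continuously_differentiable R2 -> strongly_convex R2 sigma2 -> 0 < sigma2 ->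
  continuously_differentiable R3 -> strongly_convex R3 sigma3 -> 0 < sigma3 ->
  (* (A4) *)
  (exists X, Cset X) -> closed_mset Cset -> convex_mset Cset -> is_proj Cset PC ->
  (* starting point *)
  Cset (C 0%N) ->
  (* (A2) *)
  (forall i j, in_int_dom psi (Xhat i j)) ->
  (forall k i j, in_int_dom psi ((u k i 0 + v k j 0 - C k i j) / gamma)) ->
  let E := Elam psi gamma lambda Xhat R1 R2 R3 in
  (* u-block *)
  (forall k, grad_atE (fun x => E x (v k) (C k)) (u k) (gu k)) ->
  (forall k, hess_atE (fun x => E x (v k) (C k)) (u k) (Hu k)) ->
  (forall k, let du := - (invmx (Hu k) *m gu k) in
     first_pow (fun a : R => (E (u k + a *: du)%R (v k) (C k)
                          <= E (u k) (v k) (C k) + (c1 * a * frob (gu k) du)%:E)%E)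
               beta (mu_ k) /\
     u k.+1 = u k + beta ^+ (mu_ k) *: du) ->
  (* v-block *)
  (forall k, grad_atE (fun y => E (u k.+1) y (C k)) (v k) (gv k)) ->
  (forall k, hess_atE (fun y => E (u k.+1) y (C k)) (v k) (Hv k)) ->
  (forall k, let dv := - (invmx (Hv k) *m gv k) in
     first_pow (fun a : R => (E (u k.+1) (v k + a *: dv)%R (C k)
                          <= E (u k.+1) (v k) (C k) + (c1 * a * frob (gv k) dv)%:E)%E)
               beta (mv k) /\
     v k.+1 = v k + beta ^+ (mv k) *: dv) ->
  (* C-block: projected gradient step *)
  (forall k, grad_atE (fun X => E (u k.+1) (v k.+1) X) (C k) (gC k)) ->
  (forall k, let Ca := fun a : R => PC (C k - a *: gC k) in
     first_pow (fun a : R => (E (u k.+1) (v k.+1) (Ca a)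
                          <= E (u k.+1) (v k.+1) (C k)
                             + (c1 * frob (gC k) (Ca a - C k)%R)%:E)%E)
               beta (mC k) /\
     C k.+1 = Ca (beta ^+ (mC k))) ->
  exists2 w1 : R, 0 < w1 &
    forall k,
      ((w1 * (sqnorm (u k.+1 - u k) + sqnorm (v k.+1 - v k) + sqnorm (C k.+1 - C k)))%R%:E
       <= E (u k) (v k) (C k) - E (u k.+1) (v k.+1) (C k.+1))%E.
Proof.
Proof.
move=> n0 Xge mu_d nu_d mu0 mus nu0 nus g0 l0 b01 c01 leg C2 cdR1 sc1 s1 cdR2 sc2 s2
  cdR3 sc3 s3 ex cl cv pr C0 Xint Zint E gru hu upd grv hv vpd grC Cpd.
case: leg => [[pn _] _ pc _ _].
set mn := Num.min sigma1 (Num.min sigma2 sigma3).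
have mn0 : 0 < mn by rewrite !lt_min s1 s2 s3.
have m1 : mn <= sigma1 by rewrite ge_min lexx.
have m2 : mn <= sigma2 by rewrite ge_min; apply/orP; right; rewrite ge_min lexx.
have m3 : mn <= sigma3 by rewrite ge_min; apply/orP; right; rewrite ge_min lexx orbT.
case/andP: c01 => c0 c12.
exists (c1 * (lambda * mn) / 2).
  by apply: divr_gt0 => //; apply: mulr_gt0 => //; apply: mulr_gt0.
move=> k.
have hw : forall s N, mn <= s -> 0 <= N ->
    c1 * (lambda * mn) / 2 * N <= c1 * (lambda * s) / 2 * N.
  move=> s N hs hN; apply: ler_wpM2r => //.
  have h1 : lambda * mn <= lambda * s by apply: ler_wpM2l => //; exact: ltW.
  have : c1 * (lambda * mn) <= c1 * (lambda * s) by apply: ler_wpM2l => //; exact: ltW.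
  lra.
have c01 : 0 < c1 < 1 / 2 by rewrite c0 c12.
have scu : sconv (fun x => E x (v k) (C k)) (lambda * sigma1).
  apply: (@block_sconv R n n 1 psi Xhat (fun w => gamma^-1 *: (oplus w (v k) - C k))
            (fun w => R1 w + R2 (v k) + R3 (C k)) sigma1 lambda) => //.
    by move=> x y t; apply/matrixP => i j; rewrite /oplus !mxE; ring.
  by move=> x y t t01; have := sc1 x y t t01; lra.
have [[Hpu _] Hu1] := upd k.
have fu1 : E (u k.+1) (v k) (C k) \is a fin_num by have [] := grv k.
have armu : (E (u k.+1) (v k) (C k) <= E (u k) (v k) (C k) +
              (c1 * frob (gu k) (u k.+1 - u k))%:E)%E.
  have eu : u k.+1 - u k = beta ^+ mu_ k *: (- (invmx (Hu k) *m gu k)).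
    by rewrite Hu1 addrAC subrr add0r.
  by move: Hpu; rewrite -Hu1 eu frobZr mulrA.
have d1 := @dec_lemma R n 1 (fun x => E x (v k) (C k)) _ c1 _ _ _
   (ltW (mulr_gt0 l0 s1)) c01 scu (gru k) fu1 armu.
have scv : sconv (fun y => E (u k.+1) y (C k)) (lambda * sigma2).
  apply: (@block_sconv R n n 1 psi Xhat (fun w => gamma^-1 *: (oplus (u k.+1) w - C k))
            (fun w => R1 (u k.+1) + R2 w + R3 (C k)) sigma2 lambda) => //.
    by move=> x y t; apply/matrixP => i j; rewrite /oplus !mxE; ring.
  by move=> x y t t01; have := sc2 x y t t01; lra.
have [[Hpv _] Hv1] := vpd k.
have fv1 : E (u k.+1) (v k.+1) (C k) \is a fin_num by have [] := grC k.
have armv : (E (u k.+1) (v k.+1) (C k) <= E (u k.+1) (v k) (C k) +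
              (c1 * frob (gv k) (v k.+1 - v k))%:E)%E.
  have ev : v k.+1 - v k = beta ^+ mv k *: (- (invmx (Hv k) *m gv k)).
    by rewrite Hv1 addrAC subrr add0r.
  by move: Hpv; rewrite -Hv1 ev frobZr mulrA.
have d2 := @dec_lemma R n 1 (fun y => E (u k.+1) y (C k)) _ c1 _ _ _
   (ltW (mulr_gt0 l0 s2)) c01 scv (grv k) fv1 armv.
have scC : sconv (fun X => E (u k.+1) (v k.+1) X) (lambda * sigma3).
  apply: (@block_sconv R n n n psi Xhat (fun w => gamma^-1 *: (oplus (u k.+1) (v k.+1) - w))
            (fun w => R1 (u k.+1) + R2 (v k.+1) + R3 w) sigma3 lambda) => //.
    by move=> x y t; apply/matrixP => i j; rewrite /oplus !mxE; ring.
  by move=> x y t t01; have := sc3 x y t t01; lra.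
have [[HpC _] HC1] := Cpd k.
have fC1 : E (u k.+1) (v k.+1) (C k.+1) \is a fin_num by have [] := gru k.+1.
have armC : (E (u k.+1) (v k.+1) (C k.+1) <= E (u k.+1) (v k.+1) (C k) +
              (c1 * frob (gC k) (C k.+1 - C k))%:E)%E.
  by move: HpC; rewrite -HC1.
have d3 := @dec_lemma R n n (fun X => E (u k.+1) (v k.+1) X) _ c1 _ _ _
   (ltW (mulr_gt0 l0 s3)) c01 scC (grC k) fC1 armC.
rewrite /= in d1 d2 d3.
have f0 : E (u k) (v k) (C k) \is a fin_num by have [] := gru k.
rewrite -(fineK f0) -(fineK fC1) -EFinB lee_fin.
have h1 := hw _ _ m1 (@sqnorm_ge0 R _ _ (u k.+1 - u k)).
have h2 := hw _ _ m2 (@sqnorm_ge0 R _ _ (v k.+1 - v k)).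
have h3 := hw _ _ m3 (@sqnorm_ge0 R _ _ (C k.+1 - C k)).
lra.
Qed.
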